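(* (Provably in $\mathsf{Z}^-_{\mathrm{FTM}\omega}$.) Let $E$ be a strict well-ordering of a set $U$. Then there is an ordinal $\lambda$ and an order isomorphism of $\langle U,E\rangle$ onto $\langle\lambda,\in\rangle$.
   Context: $\mathsf{Z}^-_{\mathrm{FTM}\omega}$ is Zermelo set theory without Power Set and Choice (Extensionality, Pairing, Union, Infinity, Regularity, Separation) plus: (FC) every set $X$ has a superset $Y$ such that every finite $x\subseteq Y$ belongs to $Y$; (TS) every set has a transitive superset; (MC) every set binary relation $A$ that is well-founded and extensional admits a transitive set $X$ and a bijection $\eta$ from its field onto $X$ with $jAk\iff\eta(j)\in\eta(k)$; (Count) every set admits an injection into $\omega$. *)

(* Defs.v *)
(* A model of the first-order theory Z^-_{FTM omega} is a type V
   with a binary relation mem (equality of the model = Leibniz equality).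
   "Provable in T" is rendered (via soundness/completeness) as "holds in every
   model of T". Separation is a first-order schema, stated via an explicit
   syntax of formulas of the language {mem, =}. *)

Section Model.
Variable V : Type.
Variable mem : V -> V -> Prop.

Inductive form : Type :=
| FMem : nat -> nat -> form
| FEq  : nat -> nat -> form
| FFalse : form
| FImp : form -> form -> form
| FAnd : form -> form -> form
| FOr  : form -> form -> form
| FAll : form -> form
| FEx  : form -> form.

Definition scons (x : V) (e : nat -> V) : nat -> V :=
  fun n => match n with 0 => x | S k => e k end.

Fixpoint sat (e : nat -> V) (p : form) : Prop :=
  match p with
  | FMem i j => mem (e i) (e j)
  | FEq i j => e i = e j
  | FFalse => False
  | FImp a b => sat e a -> sat e b
  | FAnd a b => sat e a /\ sat e b
  | FOr a b => sat e a \/ sat e b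
  | FAll a => forall x, sat (scons x e) a
  | FEx a => exists x, sat (scons x e) a
  end.

Definition subset (a b : V) : Prop := forall x, mem x a -> mem x b.
Definition transitive_set (a : V) : Prop := forall x y, mem x y -> mem y a -> mem x a.
Definition is_empty (e : V) : Prop := forall z, ~ mem z e.
Definition is_upair (c a b : V) : Prop := forall z, mem z c <-> (z = a \/ z = b).
Definition is_opair (p a b : V) : Prop :=
  forall z, mem z p <-> (is_upair z a a \/ is_upair z a b).
Definition pin (f a b : V) : Prop := exists p, mem p f /\ is_opair p a b.
Definition is_succ (s x : V) : Prop := forall z, mem z s <-> (mem z x \/ z = x).
Definition inductive (I : V) : Prop :=
  (exists e, mem e I /\ is_empty e) /\
  (forall x, mem x I -> exists s, mem s I /\ is_succ s x).
Definition is_omega (w : V) : Prop :=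
  inductive w /\ forall I, inductive I -> subset w I.

Definition fun_between (f A B : V) : Prop :=
  (forall p, mem p f -> exists a b, is_opair p a b /\ mem a A /\ mem b B) /\
  (forall a, mem a A -> exists b, pin f a b) /\
  (forall a b b', pin f a b -> pin f a b' -> b = b').
Definition injection (f A B : V) : Prop :=
  fun_between f A B /\ (forall a a' b, pin f a b -> pin f a' b -> a = a').
Definition bijection (f A B : V) : Prop :=
  injection f A B /\ (forall b, mem b B -> exists a, mem a A /\ pin f a b).

Definition finite (x : V) : Prop :=
  exists w n f, is_omega w /\ mem n w /\ bijection f x n.

Definition is_relation (A : V) : Prop :=
  forall p, mem p A -> exists a b, is_opair p a b.
Definition infield (A x : V) : Prop := exists y, pin A x y \/ pin A y x.
Definition wf_rel (A : V) : Prop :=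
  forall S, (exists s, mem s S) ->
    exists m, mem m S /\ forall s, mem s S -> ~ pin A s m.
Definition ext_rel (A : V) : Prop :=
  forall j k, infield A j -> infield A k ->
    (forall i, pin A i j <-> pin A i k) -> j = k.

Record ZFTMw : Prop := {
  ax_ext : forall a b, (forall x, mem x a <-> mem x b) -> a = b;
  ax_pair : forall a b, exists c, is_upair c a b;
  ax_union : forall a, exists u, forall x, mem x u <-> exists y, mem y a /\ mem x y;
  ax_inf : exists I, inductive I;
  ax_reg : forall x, (exists y, mem y x) ->
             exists y, mem y x /\ forall z, mem z x -> ~ mem z y;
  ax_sep : forall (phi : form) (env : nat -> V) (a : V),
             exists b, forall x, mem x b <-> (mem x a /\ sat (scons x env) phi);
  ax_FC : forall X, exists Y, subset X Y /\
             forall x, finite x -> subset x Y -> mem x Y;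
  ax_TS : forall X, exists Y, subset X Y /\ transitive_set Y;
  ax_MC : forall A, is_relation A -> wf_rel A -> ext_rel A ->
            forall F, (forall x, mem x F <-> infield A x) ->
            exists X eta, transitive_set X /\ bijection eta F X /\
              forall j k, mem j F -> mem k F ->
                (pin A j k <-> exists u v, pin eta j u /\ pin eta k v /\ mem u v);
  ax_count : forall X, exists w f, is_omega w /\ injection f X w
}.

Definition strict_wellorder (U : V) (R : V -> V -> Prop) : Prop :=
  (forall x, mem x U -> ~ R x x) /\
  (forall x y z, mem x U -> mem y U -> mem z U -> R x y -> R y z -> R x z) /\
  (forall x y, mem x U -> mem y U -> R x y \/ x = y \/ R y x) /\
  (forall S, subset S U -> (exists s, mem s S) ->
     exists m, mem m S /\ forall s, mem s S -> s <> m -> R m s).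

Definition ordinal (lam : V) : Prop :=
  transitive_set lam /\ strict_wellorder lam mem.

Definition order_iso (f U E lam : V) : Prop :=
  bijection f U lam /\
  forall x y u v, mem x U -> mem y U -> pin f x u -> pin f y v ->
    (pin E x y <-> mem u v).

End Model.

(* Main.v *)
Require Import Defs.
From Stdlib Require Import Classical.

Definition fupair (z a b : nat) : form :=
  FAnd (FAll (FImp (FMem 0 (S z)) (FOr (FEq 0 (S a)) (FEq 0 (S b)))))
       (FAll (FImp (FOr (FEq 0 (S a)) (FEq 0 (S b))) (FMem 0 (S z)))).

Definition fopair (p a b : nat) : form :=
  FAnd (FAll (FImp (FMem 0 (S p)) (FOr (fupair 0 (S a) (S a)) (fupair 0 (S a) (S b)))))
       (FAll (FImp (FOr (fupair 0 (S a) (S a)) (fupair 0 (S a) (S b))) (FMem 0 (S p)))).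

Lemma sat_fupair V mem e z a b :
  sat V mem e (fupair z a b) <-> is_upair V mem (e z) (e a) (e b).
Proof.
  unfold is_upair; simpl; split.
  - intros [H1 H2] w; split; [apply H1|apply H2].
  - intros H; split; intros w; apply H.
Qed.

Lemma sat_fopair V mem e p a b :
  sat V mem e (fopair p a b) <-> is_opair V mem (e p) (e a) (e b).
Proof.
  unfold is_opair, fopair; cbn [sat]; split.
  - intros [H1 H2] w.
    specialize (H1 w); specialize (H2 w).
    rewrite !sat_fupair in H1, H2. simpl in *. tauto.
  - intros H; split; intros w; rewrite !sat_fupair; simpl; apply H.
Qed.

Lemma upair_ex V mem (HT : ZFTMw V mem) a b : exists c, is_upair V mem c a b.
Proof. apply (ax_pair _ _ HT). Qed.

Lemma opair_inj V mem (HT : ZFTMw V mem) p a b a' b' :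
  is_opair V mem p a b -> is_opair V mem p a' b' -> a = a' /\ b = b'.
Proof.
  intros H1 H2.
  assert (Ha : a = a').
  { destruct (upair_ex V mem HT a a) as [s Hs].
    assert (mem s p) by (apply H1; auto).
    apply H2 in H.
    assert (mem a s) by (apply Hs; auto).
    destruct H as [H|H]; apply H in H0; destruct H0; auto.
    subst.
    assert (mem a' s) by (apply H; auto). apply Hs in H0. destruct H0; auto. }
  subst a'. split; auto.
  destruct (upair_ex V mem HT a b) as [c Hc].
  destruct (upair_ex V mem HT a b') as [c' Hc'].
  assert (mem c p) by (apply H1; auto).
  assert (mem c' p) by (apply H2; auto).
  apply H2 in H. apply H1 in H0.
  assert (Hb : b = a \/ b = b').
  { assert (mem b c) by (apply Hc; auto). destruct H as [H|H]; apply H in H3; tauto. }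
  assert (Hb' : b' = a \/ b' = b).
  { assert (mem b' c') by (apply Hc'; auto). destruct H0 as [H0|H0]; apply H0 in H3; tauto. }
  destruct Hb; destruct Hb'; subst; auto.
Qed.

Lemma upair_uniq V mem (HT : ZFTMw V mem) z c a b :
  is_upair V mem z a b -> is_upair V mem c a b -> z = c.
Proof.
  intros H1 H2. apply (ax_ext _ _ HT). intros x. rewrite (H1 x), (H2 x). tauto.
Qed.

Lemma small_case V mem (HT : ZFTMw V mem) (U E : V) :
  strict_wellorder V mem U (pin V mem E) ->
  ~ (exists x y, mem x U /\ mem y U /\ x <> y) ->
  exists lam f, ordinal V mem lam /\ order_iso V mem f U E lam.
Proof.
  intros (Hirr & Htr & Htri & Hwf) Hn.
  destruct (ax_inf _ _ HT) as [I [[e [_ He]] _]].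
  destruct (classic (exists a, mem a U)) as [[a Ha]|Hne].
  - assert (HU : forall x, mem x U -> x = a).
    { intros x Hx. apply NNPP; intro. apply Hn. exists x, a; auto. }
    destruct (upair_ex V mem HT e e) as [o Ho].
    destruct (upair_ex V mem HT a a) as [s1 Hs1].
    destruct (upair_ex V mem HT a e) as [s2 Hs2].
    destruct (upair_ex V mem HT s1 s2) as [p Hp0].
    destruct (upair_ex V mem HT p p) as [f Hf].
    assert (Hp : is_opair V mem p a e).
    { intro z. rewrite (Hp0 z). split.
      - intros [->| ->]; auto.
      - intros [H|H]; [left|right]; eapply upair_uniq; eauto. }
    assert (Hpinf : forall x b, pin V mem f x b <-> x = a /\ b = e).
    { intros x b; split.
      - intros [q [Hq Hqo]]. apply Hf in Hq. assert (q = p) by tauto. subst q.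
        destruct (opair_inj V mem HT p x b a e); auto.
      - intros [-> ->]. exists p. split; auto. apply Hf; auto. }
    assert (HO : forall z, mem z o <-> z = e).
    { intro z. rewrite (Ho z). tauto. }
    exists o, f. split.
    + split.
      * intros x y Hxy Hy. apply HO in Hy. subst. exfalso; eapply He; eauto.
      * split; [|split; [|split]].
        -- intros x Hx Hxx. apply HO in Hx; subst. eapply He; eauto.
        -- intros x y z _ Hy _ Hxy _. apply HO in Hy; subst. exfalso; eapply He; eauto.
        -- intros x y Hx Hy. apply HO in Hx; apply HO in Hy; subst; auto.
        -- intros S HS [s Hs]. exists s. split; auto. intros s' Hs' Hne.
           exfalso. apply Hne. apply HS in Hs; apply HS in Hs'.
           apply HO in Hs; apply HO in Hs'. congruence.
    + split.
      * split; [split; [split; [|split]|]|].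
        -- intros q Hq. apply Hf in Hq. assert (q = p) by tauto. subst q.
           exists a, e. split; auto. split; auto. apply HO; auto.
        -- intros x Hx. apply HU in Hx. subst. exists e. apply Hpinf; auto.
        -- intros x b b' H1 H2. apply Hpinf in H1; apply Hpinf in H2. intuition congruence.
        -- intros x x' b H1 H2. apply Hpinf in H1; apply Hpinf in H2. intuition congruence.
        -- intros b Hb. apply HO in Hb. subst. exists a. split; auto. apply Hpinf; auto.
      * intros x y u v Hx Hy Hu Hv.
        apply HU in Hx; apply HU in Hy. apply Hpinf in Hu; apply Hpinf in Hv.
        destruct Hu as [_ ->]; destruct Hv as [_ ->]; subst.
        split; intro H.
        -- exfalso; eapply Hirr; eauto.
        -- exfalso; eapply He; eauto.
  - exists e, e. split.
    + split.
      * intros x y _ Hy. exfalso; eapply He; eauto.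
      * split; [|split; [|split]].
        -- intros x Hx. exfalso; eapply He; eauto.
        -- intros x y z Hx. exfalso; eapply He; eauto.
        -- intros x y Hx. exfalso; eapply He; eauto.
        -- intros S HS [s Hs]. exfalso; eapply He; eauto.
    + split.
      * split; [split; [split; [|split]|]|].
        -- intros q Hq. exfalso; eapply He; eauto.
        -- intros x Hx. exfalso; eauto.
        -- intros x b b' [q [Hq _]]. exfalso; eapply He; eauto.
        -- intros x x' b [q [Hq _]]. exfalso; eapply He; eauto.
        -- intros b Hb. exfalso; eapply He; eauto.
      * intros x y u v Hx. exfalso; eauto.
Qed.

Lemma general_case V mem (HT : ZFTMw V mem) (U E : V) :
  strict_wellorder V mem U (pin V mem E) ->
  (exists x y, mem x U /\ mem y U /\ x <> y) ->
  exists lam f, ordinal V mem lam /\ order_iso V mem f U E lam.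
Proof.
  intros (Hirr & Htr & Htri & Hwf) H2.
  destruct (ax_sep _ _ HT (FEx (FEx (FAnd (fopair 2 1 0) (FAnd (FMem 1 3) (FMem 0 3)))))
     (fun _ => U) E) as [A HA].
  assert (HA' : forall p, mem p A <-> mem p E /\ exists a b, is_opair V mem p a b /\ mem a U /\ mem b U).
  { intro p. rewrite HA. cbn [sat]. split.
    - intros [Hp [a [b [Ho Hab]]]]. rewrite sat_fopair in Ho. simpl in *. eauto 10.
    - intros [Hp [a [b [Ho Hab]]]]. split; auto. exists a, b. rewrite sat_fopair. simpl. auto. }
  assert (HpinA : forall x y, pin V mem A x y <-> pin V mem E x y /\ mem x U /\ mem y U).
  { intros x y; split.
    - intros [p [Hp Ho]]. apply HA' in Hp. destruct Hp as [HpE [a [b [Ho' [Ha Hb]]]]].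
      destruct (opair_inj V mem HT p x y a b Ho Ho'); subst. split; auto. exists p; auto.
    - intros [[p [Hp Ho]] [Hx Hy]]. exists p. split; auto. apply HA'. split; eauto 10. }
  assert (Hfield : forall x, mem x U <-> infield V mem A x).
  { intro x; split.
    - intros Hx. destruct H2 as [a [b [Ha [Hb Hab]]]].
      assert (exists w, mem w U /\ w <> x) as [w [Hw Hwx]].
      { destruct (classic (a = x)); [exists b; split; congruence | exists a; auto]. }
      destruct (Htri x w Hx Hw) as [H|[H|H]].
      + exists w. left. apply HpinA; auto.
      + congruence.
      + exists w. right. apply HpinA; auto.
    - intros [y [H|H]]; apply HpinA in H; tauto. }
  assert (Hrel : is_relation V mem A).
  { intros p Hp. apply HA' in Hp. destruct Hp as [_ [a [b [Ho _]]]]. eauto. }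
  assert (Hwfr : wf_rel V mem A).
  { intros S [s Hs].
    destruct (ax_sep _ _ HT (FMem 0 1) (fun _ => U) S) as [T HT'].
    simpl in HT'.
    destruct (classic (exists t, mem t T)) as [Hne|Hne].
    - destruct (Hwf T) as [m [Hm Hmin]].
      + intros t Ht. apply HT' in Ht. tauto.
      + auto.
      + exists m. apply HT' in Hm as Hm'. split; [tauto|].
        intros s' Hs' Hp. apply HpinA in Hp. destruct Hp as [Hp [Hs'U HmU]].
        destruct (classic (s' = m)) as [->|Hneq].
        * eapply Hirr; eauto.
        * assert (mem s' T) by (apply HT'; auto).
          specialize (Hmin s' H Hneq). eapply Hirr; [exact HmU|].
          eapply Htr; [exact HmU|exact Hs'U|exact HmU|eauto|eauto].
    - exists s. split; auto. intros s' Hs' Hp. apply HpinA in Hp.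
      apply Hne. exists s. apply HT'. tauto. }
  assert (Hext : ext_rel V mem A).
  { intros j k Hj Hk Hsame. apply Hfield in Hj; apply Hfield in Hk.
    destruct (Htri j k Hj Hk) as [H|[H|H]]; auto.
    - exfalso. assert (pin V mem A j k) by (apply HpinA; auto).
      apply (proj2 (Hsame j)) in H0. apply HpinA in H0. eapply Hirr; [exact Hj|]; tauto.
    - exfalso. assert (pin V mem A k j) by (apply HpinA; auto).
      apply (proj1 (Hsame k)) in H0. apply HpinA in H0. eapply Hirr; [exact Hk|]; tauto. }
  destruct (ax_MC _ _ HT A Hrel Hwfr Hext U Hfield) as [X [eta [HX [Hbij Hiso]]]].
  destruct Hbij as [[[Hf1 [Hf2 Hf3]] Hinj] Hsurj].
  assert (Hiso' : forall j k u v, mem j U -> mem k U -> pin V mem eta j u -> pin V mem eta k v ->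
     (pin V mem E j k <-> mem u v)).
  { intros j k u v Hj Hk Hu Hv. split.
    - intros H. assert (pin V mem A j k) by (apply HpinA; auto).
      apply (Hiso j k Hj Hk) in H0. destruct H0 as [u' [v' [Hu' [Hv' Huv]]]].
      rewrite (Hf3 _ _ _ Hu Hu'), (Hf3 _ _ _ Hv Hv'). auto.
    - intros H. assert (pin V mem A j k). { apply (Hiso j k Hj Hk). eauto 10. }
      apply HpinA in H0; tauto. }
  assert (HtriX : forall u v, mem u X -> mem v X -> mem u v \/ u = v \/ mem v u).
  { intros u v Hu Hv.
    destruct (Hsurj u Hu) as [j [Hj Hju]].
    destruct (Hsurj v Hv) as [k [Hk Hkv]].
    destruct (Htri j k Hj Hk) as [H|[H|H]].
    * left. apply (Hiso' j k u v); auto.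
    * subst. right; left. eapply Hf3; eauto.
    * right; right. apply (Hiso' k j v u); auto. }
  exists X, eta. split.
  - split; auto. split; [|split; [|split]].
    + intros u Hu Huu. destruct (Hsurj u Hu) as [j [Hj Hju]].
      eapply Hirr; [exact Hj|]. apply (Hiso' j j u u); auto.
    + intros u v w Hu Hv Hw Huv Hvw.
      destruct (Hsurj u Hu) as [j [Hj Hju]].
      destruct (Hsurj v Hv) as [k [Hk Hkv]].
      destruct (Hsurj w Hw) as [l [Hl Hlw]].
      apply (Hiso' j l u w); auto.
      apply (Htr j k l); auto.
      * apply (Hiso' j k u v); auto.
      * apply (Hiso' k l v w); auto.
    + exact HtriX.
    + intros S HS Hne. destruct (ax_reg _ _ HT S Hne) as [m [Hm Hmin]].
      exists m. split; auto. intros s Hs Hsm.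
      destruct (HtriX m s) as [H|[H|H]]; auto.
      * congruence.
      * exfalso; eapply Hmin; eauto.
  - split; [split; [split; [split; [|split]|]|]|]; auto.
Qed.

Theorem lemma9p3 (V : Type) (mem : V -> V -> Prop) (HT : ZFTMw V mem)
  (U E : V) :
  strict_wellorder V mem U (pin V mem E) ->
  exists lam f, ordinal V mem lam /\ order_iso V mem f U E lam.
Proof.
  intros HW.
  destruct (classic (exists x y, mem x U /\ mem y U /\ x <> y)).
  - apply general_case; auto.
  - apply small_case; auto.
Qed.
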